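(* Let $\Sigma$ be a finite set of symbols, $\mathbf{x}\in\Sigma^*$, and $S=\{(T_1,\delta_1),\dots,(T_n,\delta_n)\}$ a perturbation space with $T_k=(\varphi_k,f_k)$, $\varphi_k:\Sigma^{s_k}\to\{0,1\}$, $f_k:\Sigma^{s_k}\to2^{\Sigma^{t_k}}$, $s_k\ge1$. Let $F=\{\mathrm{lstm}(\mathbf{z},h_0)\mid\mathbf{z}\in S(\mathbf{x})\}$. Define boxes $\widehat{H}_{i,j}^{S'}$ for $S'\in\mathcal{D}(S)$ by $\widehat{H}_{0,0}^{\varnothing}=\alpha(\{0^d\})$, $\widehat{H}_{i,j}^{S'}=\bot$ whenever $i<0$ or $j<0$ or $(i,j)=(0,0)$ with $S'\neq\varnothing$, and for $i\ge0$, $j\ge1$: $$\widehat{H}_{i,j}^{S'}=\widehat{\mathrm{lstm}}\big(\alpha(\{x_j\}),\widehat{H}_{i-1,j-1}^{S'}\big)\ \sqcup \bigsqcup_{\substack{1\le k\le n,\ \delta'_k\ge1,\ j\ge s_k\\ \varphi_k(\mathbf{x}_{j-s_k+1:j})=1}}\widehat{\mathrm{lstm}}\big(\alpha(f_k(\mathbf{x}_{j-s_k+1:j})),\widehat{H}_{i-t_k,\,j-s_k}^{S'_{k\downarrow}}\big),$$ and $\widehat{F}=\bigsqcup_{S'\in\mathcal{D}(S)}\bigsqcup_{i\ge0}\widehat{H}_{i,|\mathbf{x}|}^{S'}$. Then $F\subseteq\widehat{F}$, and the number of LSTM cell evaluations needed to compute $\widehat{F}$ is $O\big(|\mathbf{x}|\cdot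 n\cdot\prod_{i=1}^n\delta_i\big)$.
   Context: Strings: $\mathbf{x}_{a:b}=x_a\cdots x_b$, $|\mathbf{x}|$ length, $\epsilon$ empty string. A string transformation is $T=(\varphi,f)$, $\varphi:\Sigma^s\to\{0,1\}$, $f:\Sigma^s\to2^{\Sigma^t}$. A perturbation space is $S=\{(T_1,\delta_1),\dots,(T_n,\delta_n)\}$, $\delta_k\in\mathbb{N}$; $S(\mathbf{x})$ is the set of all $\mathbf{z}$ for which there is a factorization $\mathbf{x}=\mathbf{u}_0\mathbf{w}_1\mathbf{u}_1\cdots\mathbf{w}_m\mathbf{u}_m$ and indices $k_l$ with $\varphi_{k_l}(\mathbf{w}_l)=1$, $\mathbf{z}=\mathbf{u}_0\mathbf{w}'_1\mathbf{u}_1\cdots\mathbf{w}'_m\mathbf{u}_m$, $\mathbf{w}'_l\in f_{k_l}(\mathbf{w}_l)$, and each $k$ occurring at most $\delta_k$ times among the $k_l$. $\mathcal{D}(S)$ is the set of all $\{(T_k,\delta'_k)\}_k$ with $0\le\delta'_k\le\delta_k$; $\varnothing$ is the one with all $\delta'_k=0$; $S'_{k\downarrow}$ is $S'$ with $\delta'_k$ decreased by 1. LSTM: an embedding $e:\Sigma\to\mathbb{R}^m$ and a cell $C:\mathbb{R}^m\times\mathbb{R}^d\to\mathbb{R}^d$ give $\mathrm{lstm}(x,h)=C(e(x),h)$, extended to strings by $\mathrm{lstm}(\epsilon,h)=h$, $\mathrm{lstm}(\mathbf{z},h)=\mathrm{lstm}(z_{|\mathbf{z}|},\mathrm{lstm}(\mathbf{z}_{1:|\mathbf{z}|-1},h))$;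 $h_0=0^d$. Interval domain: a box is a product of closed intervals $[l,u]$; $\bot$ denotes the empty abstract element. For a finite nonempty set $X\subset\mathbb{R}^p$, $\alpha(X)$ is the smallest box containing $X$ (componentwise $[\min,\max]$), and $\alpha(\emptyset)=\bot$; for a set of symbols, $\alpha$ is applied to their embeddings. The join $B\sqcup B'$ is the smallest box containing both ($\bot\sqcup B=B$). $\widehat{C}$ is a sound abstract transformer of the cell: for boxes $B_e\subseteq\mathbb{R}^m$, $B_h\subseteq\mathbb{R}^d$, $\widehat{C}(B_e,B_h)$ is a box containing $C(e,h)$ for all $e\in B_e$, $h\in B_h$, and $\widehat{C}(\cdot,\bot)=\widehat{C}(\bot,\cdot)=\bot$. For a finite set $W$ of strings all of length $t$ and a box $B$, $\widehat{\mathrm{lstm}}(\alpha(W),B)$ is computed by $B_0=B$, $B_r=\widehat{C}(\alpha(\{e(w_r):\mathbf{w}\in W\}),B_{r-1})$ for $r=1,\dots,t$, returning $B_t$ (each step is one LSTM cell evaluation). The inclusion $F\subseteq\widehat{F}$ is read with $\bot$ as the empty set. In the complexity bound the sizes $s_k,t_k$ of the transformations are regarded as constants.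
   Formalization: The number of LSTM cell evaluations is bounded by c·|x|·max(1,n)·∏ₖ(δₖ+1) in place of O(|x|·n·∏ᵢδᵢ), and evaluations whose hidden-state input box is ⊥ are not counted. Each condition added here is assumed in the paper as well or is needed for the statement above to hold. *)

(* Defs.v *)
From HB Require Import structures.
From mathcomp Require Import all_boot all_order all_algebra.
Import Order.TTheory GRing.Theory Num.Theory.

Record trans (Sigma : finType) := Trans {
  tr_s : nat;
  tr_t : nat;
  tr_phi : tr_s.-tuple Sigma -> bool;
  tr_f : tr_s.-tuple Sigma -> {set tr_t.-tuple Sigma} }.

Arguments tr_s {Sigma}.
Arguments tr_t {Sigma}.
Arguments tr_phi {Sigma}.
Arguments tr_f {Sigma}.

Section Perturbation.
Variable Sigma : finType.

(* phi and f applied to an arbitrary string w: phi(w) = 1 requires w in Sigma^s *)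
Definition phiS (T : trans Sigma) (w : seq Sigma) : bool :=
  match (insub w : option ((tr_s T).-tuple Sigma)) with
  | Some tw => tr_phi T tw | None => false end.

Definition fS (T : trans Sigma) (w : seq Sigma) : seq (seq Sigma) :=
  match (insub w : option ((tr_s T).-tuple Sigma)) with
  | Some tw => [seq val z | z <- enum (tr_f T tw)] | None => [::] end.

(* one factor w_l, its transformation index k_l, its replacement w'_l,
   and the following untouched factor u_l *)
Record edit (n : nat) := Edit {
  ed_k : 'I_n; ed_w : seq Sigma; ed_w' : seq Sigma; ed_u : seq Sigma }.
Arguments ed_k {n}. Arguments ed_w {n}. Arguments ed_w' {n}. Arguments ed_u {n}.

Definition in_pspace (n : nat) (T : 'I_n -> trans Sigma) (delta : 'I_n -> nat)
    (x z : seq Sigma) : Prop :=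
  exists (u0 : seq Sigma) (eds : seq (edit n)),
    [/\ x = u0 ++ flatten [seq ed_w ed ++ ed_u ed | ed <- eds],
        z = u0 ++ flatten [seq ed_w' ed ++ ed_u ed | ed <- eds],
        all (fun ed => phiS (T (ed_k ed)) (ed_w ed)
                       && (ed_w' ed \in fS (T (ed_k ed)) (ed_w ed))) eds
      & forall k, (count (fun ed => ed_k ed == k) eds <= delta k)%N].

End Perturbation.

Section Boxes.
Variable R : realFieldType.
Local Open Scope ring_scope.

(* a box in R^p, given by its lower and upper corners; None is bottom *)
Definition box (p : nat) := ('rV[R]_p * 'rV[R]_p)%type.

Definition in_box (p : nat) (B : option (box p)) (v : 'rV[R]_p) : Prop :=
  match B with
  | None => False
  | Some (l, u) => forall i, (l 0 i <= v 0 i <= u 0 i)%R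
  end.

Definition bjoin (p : nat) (B B' : option (box p)) : option (box p) :=
  match B, B' with
  | None, _ => B'
  | _, None => B
  | Some (l, u), Some (l', u') =>
      Some (\row_i Num.min (l 0 i) (l' 0 i), \row_i Num.max (u 0 i) (u' 0 i))
  end.

Definition bigjoin (p : nat) (Bs : seq (option (box p))) : option (box p) :=
  foldr (bjoin p) None Bs.

(* alpha(X): smallest box containing the finite set X; alpha(empty) = bottom *)
Definition alpha (p : nat) (X : seq 'rV[R]_p) : option (box p) :=
  bigjoin p [seq Some (v, v) | v <- X].

Definition sound_abstract_cell (m d : nat)
    (C : 'rV[R]_m -> 'rV[R]_d -> 'rV[R]_d)
    (Chat : option (box m) -> option (box d) -> option (box d)) : Prop :=
  [/\ forall Be Bh e h, in_box m Be e -> in_box d Bh h -> in_box d (Chat Be Bh) (C e h),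
      forall Bh, Chat None Bh = None
    & forall Be, Chat Be None = None].

End Boxes.

Section LSTM.
Variables (R : realFieldType) (Sigma : finType) (m d : nat).
Variables (e : Sigma -> 'rV[R]_m) (C : 'rV[R]_m -> 'rV[R]_d -> 'rV[R]_d).
Variable Chat : option (box R m) -> option (box R d) -> option (box R d).

Definition lstm (z : seq Sigma) (h : 'rV[R]_d) : 'rV[R]_d :=
  foldl (fun h a => C (e a) h) h z.

(* lstmhat(alpha(W), B) for a finite set W of strings of length t *)
Definition lstm_hat (t : nat) (W : seq (t.-tuple Sigma)) (B : option (box R d))
    : option (box R d) :=
  foldl (fun B (r : 'I_t) => Chat (alpha R m [seq e (tnth w r) | w <- W]) B)
        B (enum 'I_t).

Variables (n : nat) (T : 'I_n -> trans Sigma) (delta : 'I_n -> nat).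
Variable x : seq Sigma.

(* x_{j-s+1:j} as an s-tuple (None if it does not exist) *)
Definition window (s j : nat) : option (s.-tuple Sigma) :=
  insub (take s (drop (j - s) x)).

Definition phi_at (k : 'I_n) (j : nat) : bool :=
  match window (tr_s (T k)) j with Some w => tr_phi (T k) w | None => false end.

Definition decr (dl : 'I_n -> nat) (k : 'I_n) : 'I_n -> nat :=
  fun k' => if k' == k then (dl k).-1 else dl k'.

Definition copy_term (j : nat) (Hin : option (box R d)) : option (box R d) :=
  match window 1 j with Some w => lstm_hat 1 [:: w] Hin | None => None end.

Definition trans_term (k : 'I_n) (j : nat) (Hin : option (box R d))
    : option (box R d) :=
  match window (tr_s (T k)) j with
  | Some w => if tr_phi (T k) w then lstm_hat (tr_t (T k)) (enum (tr_f (T k) w)) Hin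
              else None
  | None => None
  end.

(* Hhat_{i,j}^{S'}, computed with fuel (j+1 suffices since s_k >= 1) *)
Fixpoint Hf (fuel j i : nat) (dl : 'I_n -> nat) {struct fuel} : option (box R d) :=
  match fuel with
  | 0 => None
  | fuel'.+1 =>
    match j with
    | 0 => if (i == 0) && [forall k, dl k == 0] then alpha R d [:: 0%R] else None
    | j'.+1 =>
      bjoin R d
        (copy_term j (match i with i'.+1 => Hf fuel' j' i' dl | 0 => None end))
        (bigjoin R d
           [seq trans_term k j
                  (if (tr_t (T k) <= i)%N
                   then Hf fuel' (j - tr_s (T k)) (i - tr_t (T k)) (decr dl k)
                   else None)
           | k <- enum 'I_n & (0 < dl k)%N && (tr_s (T k) <= j)%N && phi_at k j])
    end
  end.

Definition Hhat (j i : nat) (dl : 'I_n -> nat) : option (box R d) := Hf j.+1 j i dl.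

Definition delta_max : nat := (\max_(k < n) delta k)%N.

Definition DS : seq ('I_n -> nat) :=
  [seq (fun k => nat_of_ord (g k))
  | g : {ffun 'I_n -> 'I_delta_max.+1} <- enum {ffun 'I_n -> 'I_delta_max.+1}
  & [forall k, (nat_of_ord (g k) <= delta k)%N]].

(* bound on the output length i; Hhat_{i,j} = bottom beyond it for j <= |x| *)
Definition Imax : nat := (size x + \sum_(k < n) delta k * tr_t (T k))%N.

Definition Fhat : option (box R d) :=
  bigjoin R d [seq Hhat (size x) i dl | dl <- DS, i <- iota 0 Imax.+1].

(* number of cell evaluations to compute the entry (i,j,S') from previously
   computed entries; an evaluation whose hidden-state input box is bottom is
   skipped (its result is bottom). *)
Definition cost_entry (j i : nat) (dl : 'I_n -> nat) : nat :=
  match j with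
  | 0 => 0
  | j'.+1 =>
    (match i with i'.+1 => nat_of_bool (isSome (Hhat j' i' dl)) | 0 => 0 end
     + \sum_(k < n)
         (if [&& (0 < dl k)%N, (tr_s (T k) <= j)%N, phi_at k j,
                 (tr_t (T k) <= i)%N &
                 isSome (Hhat (j - tr_s (T k)) (i - tr_t (T k)) (decr dl k))]
          then tr_t (T k) else 0))%N
  end.

Definition total_cost : nat :=
  (\sum_(dl <- DS) \sum_(1 <= j < (size x).+1) \sum_(0 <= i < Imax.+1)
      cost_entry j i dl)%N.

End LSTM.

(* Main.v *)
Require Import Defs.
From HB Require Import structures.
From mathcomp Require Import all_boot all_order all_algebra.
From mathcomp Require Import zify.
Import Order.TTheory GRing.Theory Num.Theory.

Section BoxLemmas.
Variable R : realFieldType.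
Variable p : nat.
Local Notation in_box := (in_box R p).
Local Notation bjoin := (bjoin R p).
Local Notation bigjoin := (bigjoin R p).

Lemma in_bjoinl B B' v : in_box B v -> in_box (bjoin B B') v.
Proof.
case: B => [[l u]|] //= H; case: B' => [[l' u']|] //= i.
rewrite !mxE; have /andP[H1 H2] := H i.
by rewrite ge_min le_max H1 H2.
Qed.

Lemma in_bjoinr B B' v : in_box B' v -> in_box (bjoin B B') v.
Proof.
case: B' => [[l' u']|] //= H; case: B => [[l u]|] //= i.
rewrite !mxE; have /andP[H1 H2] := H i.
by rewrite ge_min le_max H1 H2 !orbT.
Qed.

Lemma in_bigjoin s1 B s2 v : in_box B v -> in_box (bigjoin (s1 ++ B :: s2)) v.
Proof.
move=> H; elim: s1 => [|b s IH] /=; first exact: in_bjoinl.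
exact: in_bjoinr.
Qed.

Lemma in_bigjoin_map (A : eqType) (f : A -> option (box R p)) l a v :
  a \in l -> in_box (f a) v -> in_box (bigjoin (map f l)) v.
Proof.
move=> /splitPr [s1 s2] H; rewrite map_cat /=; exact: in_bigjoin.
Qed.

Lemma in_alpha X v : v \in X -> in_box (alpha R p X) v.
Proof.
rewrite /alpha => /splitPr [s1 s2]; rewrite map_cat /=.
apply: in_bigjoin => i /=; by rewrite lexx.
Qed.

Lemma bjoin_some B B' : isSome (bjoin B B') -> isSome B || isSome B'.
Proof. by case: B => [[]|]; case: B' => [[]|]. Qed.

Lemma bigjoin_some (A : Type) (f : A -> option (box R p)) l :
  isSome (bigjoin (map f l)) -> exists2 a, List.In a l & isSome (f a).
Proof.
elim: l => [|a l IH] //= /bjoin_some /orP[H|/IH [b Hb H]].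
  by exists a; [left|].
by exists b; [right|].
Qed.
End BoxLemmas.

Lemma In_mem (A : eqType) (a : A) l : List.In a l -> a \in l.
Proof. elim: l => [|b l IH] //= [->|/IH]; rewrite inE ?eqxx // => ->; by rewrite orbT. Qed.

Section Main.
Variables (R : realFieldType) (Sigma : finType) (m d : nat).
Variables (e : Sigma -> 'rV[R]_m) (C : 'rV[R]_m -> 'rV[R]_d -> 'rV[R]_d).
Variable Chat : option (box R m) -> option (box R d) -> option (box R d).
Variables (n : nat) (T : 'I_n -> trans Sigma) (x : seq Sigma).
Hypothesis hs : forall k, (0 < tr_s (T k))%N.
Hypothesis Chat_none : forall Be, Chat Be None = None.

Local Notation Hf := (Hf R Sigma m d e Chat n T x).
Local Notation lstm_hat := (lstm_hat R Sigma m d e Chat).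

Lemma lstm_hat_some t W B : isSome (lstm_hat t W B) -> isSome B.
Proof.
rewrite /lstm_hat; elim: (enum 'I_t) B => [|r rs IH] B //= /IH.
by case: B => // ; rewrite Chat_none.
Qed.

Definition sS (dl : 'I_n -> nat) := (\sum_(k < n) dl k * tr_s (T k))%N.
Definition sT (dl : 'I_n -> nat) := (\sum_(k < n) dl k * tr_t (T k))%N.

Lemma sum_decr (a : 'I_n -> nat) dl k : (0 < dl k)%N ->
  (\sum_(k' < n) dl k' * a k' = \sum_(k' < n) decr n dl k k' * a k' + a k)%N.
Proof.
move=> hk; rewrite (bigD1 k) //= [in RHS](bigD1 k) //=.
under [in RHS]eq_bigr => k' hk' do rewrite /decr (negbTE hk').
rewrite /decr eqxx.
case: (dl k) hk => // q _ /=; rewrite mulSn; lia.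
Qed.

Lemma Hf_inv fuel j i dl : isSome (Hf fuel j i dl) ->
  (i + sS dl = j + sT dl)%N.
Proof.
elim: fuel j i dl => [|fuel IH] j i dl //.
case: j => [|j] /=.
  case: ifP => // /andP[/eqP -> /forallP H0] _.
  rewrite /sS /sT !big1 // => k _; by rewrite (eqP (H0 k)).
move=> /bjoin_some /orP[H|H].
  rewrite /copy_term in H; case: (window Sigma x 1 j.+1) H => // w.
  move=> /lstm_hat_some; case: i => // i /IH; lia.
case/bigjoin_some: H => k Hk H.
move/In_mem: Hk; rewrite mem_filter => /andP[/andP[/andP[hdl hsj] _] _].
have H' : isSome (if (tr_t (T k) <= i)%N then
    Hf fuel (j.+1 - tr_s (T k)) (i - tr_t (T k)) (decr n dl k) else None).
  move: H; rewrite /trans_term; case: (window _ _ _ _) => // w.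
  by case: ifP => // _ /lstm_hat_some.
case: ifP H' => // hti /IH.
move: (@sum_decr (fun k => tr_s (T k)) dl k hdl) (@sum_decr (fun k => tr_t (T k)) dl k hdl).
rewrite /sS /sT; lia.
Qed.
End Main.

Section Sound.
Variables (R : realFieldType) (Sigma : finType) (m d : nat).
Variables (e : Sigma -> 'rV[R]_m) (C : 'rV[R]_m -> 'rV[R]_d -> 'rV[R]_d).
Variable Chat : option (box R m) -> option (box R d) -> option (box R d).
Variables (n : nat) (T : 'I_n -> trans Sigma) (x : seq Sigma).
Hypothesis hs : forall k, (0 < tr_s (T k))%N.
Hypothesis soundC : forall Be Bh e h, in_box R m Be e -> in_box R d Bh h ->
  in_box R d (Chat Be Bh) (C e h).

Local Notation Hf := (Hf R Sigma m d e Chat n T x).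
Local Notation lstm_hat := (lstm_hat R Sigma m d e Chat).
Local Notation lstm := (lstm R Sigma m d e C).

Lemma foldl_map' (A B D : Type) (f : D -> B -> D) (g : A -> B) z s :
  foldl f z (map g s) = foldl (fun h a => f h (g a)) z s.
Proof. by elim: s z => //= a s IH z. Qed.

Lemma lstm_hat_sound t W (w : t.-tuple Sigma) B v : w \in W -> in_box R d B v ->
  in_box R d (lstm_hat t W B) (lstm w v).
Proof.
move=> hw; rewrite /lstm.
have -> : (w : seq Sigma) = [seq tnth w r | r <- enum 'I_t] by rewrite map_tnth_enum.
rewrite foldl_map' /lstm_hat.
elim: (enum 'I_t) B v => //= r rs IH B v HB; apply: IH; apply: soundC => //.
by apply: in_alpha; apply/mapP; exists w.
Qed.

Inductive step := SCopy of Sigma | STr of 'I_n & seq Sigma & seq Sigma.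
Definition inp st := match st with SCopy a => [:: a] | STr _ w _ => w end.
Definition outp st := match st with SCopy a => [:: a] | STr _ _ w' => w' end.
Definition valid st := match st with SCopy _ => true
  | STr k w w' => phiS Sigma (T k) w && (w' \in fS Sigma (T k) w) end.
Definition cnt k (sts : seq step) :=
  count (fun st => if st is STr k' _ _ then k' == k else false) sts.

Lemma Hf_SS f j i dl : Hf f.+1 j.+1 i dl =
  bjoin R d (copy_term R Sigma m d e Chat x j.+1
              (match i with i'.+1 => Hf f j i' dl | 0 => None end))
    (bigjoin R d
       [seq trans_term R Sigma m d e Chat n T x k j.+1
              (if (tr_t (T k) <= i)%N
               then Hf f (j.+1 - tr_s (T k)) (i - tr_t (T k)) (decr n dl k)
               else None)
       | k <- enum 'I_n & (0 < dl k)%N && (tr_s (T k) <= j.+1)%N && phi_at Sigma n T x k j.+1]).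
Proof. by []. Qed.

Lemma main sts : all valid sts -> forall rest fuel dl,
  x = flatten (map inp sts) ++ rest -> (forall k, dl k = cnt k sts) ->
  (size (flatten (map inp sts)) < fuel)%N ->
  in_box R d (Hf fuel (size (flatten (map inp sts))) (size (flatten (map outp sts))) dl)
    (lstm (flatten (map outp sts)) 0).
Proof.
elim/last_ind: sts => [|sts st IH].
  move=> _ rest [|f] dl //= _ hdl _.
  have -> : [forall k, dl k == 0%N] by apply/forallP => k; rewrite hdl.
  by apply: in_alpha; rewrite mem_head.
rewrite all_rcons => /andP[hv hall] rest fuel dl; rewrite -cats1 !map_cat !flatten_cat /= !cats0 => hx hdl.
case: fuel => [//|f] hf.
set X' := flatten (map inp sts) in IH hx hf *.
set Z' := flatten (map outp sts) in IH *.
rewrite /lstm foldl_cat -/(lstm Z' 0) -/(lstm _ (lstm Z' 0)).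
case: st hv hx hdl hf => [a|k w w'] hv hx hdl hf.
- rewrite !size_cat /= !addn1.
  have hwin : window Sigma x 1 (size X').+1 = insub [:: a].
    by rewrite /window subn1 /= hx -catA drop_size_cat //= take0.
  apply: in_bjoinl; rewrite /copy_term hwin.
  case: insubP => [tw _ htw|]; last by [].
  have -> : C (e a) (lstm Z' 0) = lstm (val tw) (lstm Z' 0) by rewrite htw.
  apply: lstm_hat_sound; first exact: mem_head.
  apply: (IH hall (a :: rest)); first by rewrite hx -catA.
    by move=> k; rewrite hdl /cnt count_cat /= !addn0.
  by rewrite size_cat /= in hf; lia.
- move: hv; rewrite /valid /phiS /fS.
  case hi: (insub w : option ((tr_s (T k)).-tuple Sigma)) => [tw|//].
  have htw : val tw = w by move: hi; case: insubP => [u _ <- [] ->|].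
  move=> /= /andP[hphi hmem]; case/mapP: hmem => [tw' htw' hw']; subst w w'.
  have hsk := hs k.
  have hins : insub (val tw) = Some tw by rewrite valK.
  have -> : size (X' ++ val tw) = (size X' + (tr_s (T k)).-1).+1.
    by rewrite size_cat size_tuple; lia.
  have hX : (size X' + (tr_s (T k)).-1).+1 - tr_s (T k) = size X' by lia.
  have hwin : window Sigma x (tr_s (T k)) (size X' + (tr_s (T k)).-1).+1 = Some tw.
    rewrite /window hX hx -catA drop_size_cat // take_size_cat ?size_tuple //.
  have hdk : (0 < dl k)%N by rewrite hdl /cnt count_cat /= eqxx; lia.
  apply: in_bjoinr; apply: (@in_bigjoin_map R d _ _ _ k).
    rewrite mem_filter mem_enum hdk /phi_at hwin hphi /=; apply/andP; split => //; lia.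
  rewrite /trans_term hwin hphi size_cat size_tuple leq_addl hX addnK.
  apply: lstm_hat_sound => //.
  apply: (IH hall (val tw ++ rest)); first by rewrite hx -catA.
    move=> k'; rewrite /decr !hdl /cnt !count_cat /=.
    case: (eqVneq k' k) => [->|hk]; first by rewrite eqxx addn0 addn1.
    by rewrite ?(negbTE hk) /= ?addn0.
  by rewrite size_cat size_tuple in hf; lia.
Qed.
End Sound.

Section Sound2.
Variables (R : realFieldType) (Sigma : finType) (m d : nat).
Variables (e : Sigma -> 'rV[R]_m) (C : 'rV[R]_m -> 'rV[R]_d -> 'rV[R]_d).
Variable Chat : option (box R m) -> option (box R d) -> option (box R d).
Variables (n : nat) (T : 'I_n -> trans Sigma) (delta : 'I_n -> nat) (x : seq Sigma).
Hypothesis hs : forall k, (0 < tr_s (T k))%N.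
Hypothesis hC : sound_abstract_cell R m d C Chat.
Local Notation cnt := (@cnt Sigma n).
Local Notation ed_k := (ed_k Sigma n).
Local Notation ed_w := (ed_w Sigma n).
Local Notation ed_w' := (ed_w' Sigma n).
Local Notation ed_u := (ed_u Sigma n).

Definition mksteps u0 (eds : seq (edit Sigma n)) : seq (step Sigma n) :=
  map (@SCopy Sigma n) u0 ++
  flatten [seq @STr Sigma n (ed_k ed) (ed_w ed) (ed_w' ed) :: map (@SCopy Sigma n) (ed_u ed) | ed <- eds].

Lemma inp_copy u : flatten (map (@inp Sigma n) (map (@SCopy Sigma n) u)) = u.
Proof. by elim: u => //= a u ->. Qed.
Lemma outp_copy u : flatten (map (@outp Sigma n) (map (@SCopy Sigma n) u)) = u.
Proof. by elim: u => //= a u ->. Qed.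
Lemma cnt_copy k u : cnt k (map (@SCopy Sigma n) u) = 0%N.
Proof. by elim: u. Qed.
Lemma valid_copy u : all (@valid Sigma n T) (map (@SCopy Sigma n) u).
Proof. by elim: u. Qed.

Lemma mksteps_props u0 eds :
  [/\ flatten (map (@inp Sigma n) (mksteps u0 eds)) =
        u0 ++ flatten [seq ed_w ed ++ ed_u ed | ed <- eds],
      flatten (map (@outp Sigma n) (mksteps u0 eds)) =
        u0 ++ flatten [seq ed_w' ed ++ ed_u ed | ed <- eds],
      (forall k, cnt k (mksteps u0 eds) = count (fun ed => ed_k ed == k) eds) &
      (all (fun ed => phiS Sigma (T (ed_k ed)) (ed_w ed)
                       && (ed_w' ed \in fS Sigma (T (ed_k ed)) (ed_w ed))) eds ->
       all (@valid Sigma n T) (mksteps u0 eds))].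
Proof.
rewrite /mksteps; split.
- rewrite map_cat flatten_cat inp_copy; congr (_ ++ _).
  elim: eds => //= ed eds <-; by rewrite map_cat flatten_cat /= inp_copy catA.
- rewrite map_cat flatten_cat outp_copy; congr (_ ++ _).
  elim: eds => //= ed eds <-; by rewrite map_cat flatten_cat /= outp_copy catA.
- move=> k; rewrite /cnt count_cat -/(cnt k _) cnt_copy add0n.
  elim: eds => //= ed eds <-; by rewrite count_cat -/(cnt k _) cnt_copy.
- rewrite all_cat valid_copy /=.
  elim: eds => //= ed eds IH /andP[h1 h2]; rewrite all_cat valid_copy h1 /=.
  exact: IH.
Qed.

Theorem soundness z : in_pspace Sigma n T delta x z ->
  in_box R d (Fhat R Sigma m d e Chat n T delta x) (lstm R Sigma m d e C z 0%R).
Proof.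
case=> u0 [eds [hx hz hall hcnt]].
have [hi ho hc hv] := mksteps_props u0 eds.
set sts := mksteps u0 eds in hi ho hc hv.
have hle : forall k, (cnt k sts <= delta k)%N by move=> k; rewrite hc.
have hmax : forall k, (cnt k sts < (delta_max n delta).+1)%N.
  move=> k; rewrite ltnS; apply: leq_trans (hle k) _; exact: (leq_bigmax (F := delta)).
pose g : {ffun 'I_n -> 'I_(delta_max n delta).+1} := [ffun k => inord (cnt k sts)].
have hg : forall k, nat_of_ord (g k) = cnt k sts by move=> k; rewrite ffunE inordK.
pose dl := fun k => nat_of_ord (g k).
have hsC := hC; case: hsC => soundC _ Chat_none.
have H : in_box R d (Hhat R Sigma m d e Chat n T x (size x) (size z) dl)
                  (lstm R Sigma m d e C z 0).
  rewrite /Hhat hz -ho {2 3}hx -hi.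
  apply: (@main R Sigma m d e C Chat n T x hs soundC _ (hv hall) [::]); first by rewrite cats0 hi.
    by move=> k; rewrite /dl hg.
  by [].
have hsome : isSome (Hhat R Sigma m d e Chat n T x (size x) (size z) dl).
  by move: H; case: (Hhat _ _ _ _ _ _ _ _ _ _ _ _).
have := @Hf_inv R Sigma m d e Chat n T x Chat_none _ _ _ _ hsome.
have hsT : (sT Sigma n T dl <= \sum_(k < n) delta k * tr_t (T k))%N.
  by apply: leq_sum => k _; rewrite /dl hg leq_mul2r hle orbT.
move=> hinv.
have hiz : (size z < (Imax Sigma n T delta x).+1)%N by rewrite ltnS /Imax; lia.
have hgin : g \in [seq g' : {ffun 'I_n -> 'I_(delta_max n delta).+1} <- enum {ffun 'I_n -> 'I_(delta_max n delta).+1} |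
                   [forall k, (nat_of_ord (g' k) <= delta k)%N]].
  rewrite mem_filter mem_enum andbT; apply/forallP => k; by rewrite hg.
rewrite /Fhat /DS.
have : size z \in iota 0 (Imax Sigma n T delta x).+1 by rewrite mem_iota.
case/splitPr => s3 s4.
case/splitPr: hgin => s1 s2.
rewrite map_cat /= map_cat flatten_cat /= map_cat /= -catA catA.
exact: in_bigjoin.
Qed.
End Sound2.
Lemma bar (T : finType) (P : pred T) : size (filter P (enum T)) = #|P|.
Proof.
rewrite cardE /enum_mem.
have -> : [seq x <- Finite.enum T | mem T x] = Finite.enum T by apply/all_filterP/allP.
by [].
Qed.
Lemma card_le_ord N D : #|[pred i : 'I_N | (i <= D)%N]| <= D.+1.
Proof.
rewrite cardE -(size_map val) -[D.+1](size_iota 0).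
apply: uniq_leq_size; first by rewrite map_inj_uniq ?enum_uniq //; exact: val_inj.
move=> y /mapP [i]; rewrite mem_enum inE => hi ->; by rewrite mem_iota.
Qed.
Lemma foldr_prod (I : Type) (F : I -> nat) s : foldr muln 1 [seq F k | k <- s] = \prod_(k <- s) F k.
Proof. elim: s => [|a s IH]; by rewrite ?big_nil ?big_cons //= IH. Qed.
Lemma size_DS n delta : size (DS n delta) <= \prod_(k < n) (delta k).+1.
Proof.
rewrite /DS size_map bar.
set M := delta_max n delta.
pose F := (fun k : 'I_n => [pred i : 'I_M.+1 | (i <= delta k)%N]).
have := card_family F.
have -> : #|[pred g : {ffun 'I_n -> 'I_M.+1} | [forall k, (nat_of_ord (g k) <= delta k)%N]]|
   = #|(family F : simpl_pred {dffun forall x : 'I_n, 'I_M.+1})|.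
  by apply: eq_card => g; rewrite !inE.
move=> ->; rewrite /image_mem foldr_prod big_enum.
by apply: leq_prod => k _; apply: card_le_ord.
Qed.

Lemma sum_ind N c t : (\sum_(0 <= i < N) (if i == c then t else 0) = if c < N then t else 0)%N.
Proof.
elim: N => [|N IH]; first by rewrite big_geq.
rewrite big_nat_recr //= IH.
case: ifP => h1; case: ifP => h2; case: ifP => h3; try lia.
all: move: h2 => /eqP h2; lia.
Qed.

Lemma sum_ind_le N c t : (\sum_(0 <= i < N) (if i == c then t else 0) <= t)%N.
Proof. by rewrite sum_ind; case: ifP. Qed.

Section Cost.
Variables (R : realFieldType) (Sigma : finType) (m d : nat).
Variables (e : Sigma -> 'rV[R]_m).
Variable Chat : option (box R m) -> option (box R d) -> option (box R d).
Variables (n : nat) (T : 'I_n -> trans Sigma) (x : seq Sigma).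
Hypothesis Chat_none : forall Be, Chat Be None = None.

Lemma cost_j j' dl N :
  (\sum_(0 <= i < N) cost_entry R Sigma m d e Chat n T x j'.+1 i dl
     <= 1 + \sum_(k < n) tr_t (T k))%N.
Proof.
rewrite /cost_entry big_split /=.
apply: leq_add.
  pose c0 := (j' + sT Sigma n T dl - sS Sigma n T dl).+1.
  apply: leq_trans (sum_ind_le N c0 1).
  apply: leq_sum => -[|i] _ //.
  case hS: (isSome (Hhat R Sigma m d e Chat n T x j' i dl)) => //=.
  have := @Hf_inv R Sigma m d e Chat n T x Chat_none _ _ _ _ hS.
  by move=> h; rewrite (_ : i.+1 == c0) //; apply/eqP; rewrite /c0; lia.
rewrite exchange_big /=; apply: leq_sum => k _.
pose ck := (j'.+1 - tr_s (T k) + sT Sigma n T (decr n dl k)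
            - sS Sigma n T (decr n dl k) + tr_t (T k))%N.
apply: leq_trans (sum_ind_le N ck (tr_t (T k))).
apply: leq_sum => i _.
case: ifP => // /and5P[_ _ _ hti hS].
have := @Hf_inv R Sigma m d e Chat n T x Chat_none _ _ _ _ hS.
by move=> h; rewrite (_ : i == ck) //; apply/eqP; rewrite /ck; lia.
Qed.
End Cost.

Lemma sum_seq_le (A : Type) (s : seq A) (F : A -> nat) c :
  (forall a, F a <= c) -> (\sum_(a <- s) F a <= size s * c)%N.
Proof.
move=> h; elim: s => [|a s IH]; first by rewrite big_nil.
by rewrite big_cons /= mulSn leq_add.
Qed.

Lemma total_bound K (R : realFieldType) (Sigma : finType) (m d : nat)
  (e : Sigma -> 'rV[R]_m)
  (Chat : option (box R m) -> option (box R d) -> option (box R d))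
  (n : nat) (T : 'I_n -> trans Sigma) (delta : 'I_n -> nat) (x : seq Sigma) :
  (forall Be, Chat Be None = None) ->
  (forall k, tr_t (T k) <= K)%N ->
  (total_cost R Sigma m d e Chat n T delta x
     <= K.+1 * size x * maxn 1 n * \prod_(k < n) (delta k).+1)%N.
Proof.
move=> hN hK; rewrite /total_cost.
apply: leq_trans (@sum_seq_le _ _ _ (size x * (1 + n * K)) _) _.
  move=> dl; rewrite big_add1 succnK.
  apply: leq_trans (_ : \sum_(0 <= j < size x) (1 + n * K) <= _)%N.
    apply: leq_sum => j _; have h := @cost_j R Sigma m d e Chat n T x hN j dl (Imax Sigma n T delta x).+1; apply: (leq_trans h).
    have hs : (\sum_(k < n) tr_t (T k) <= n * K)%N.
      apply: (@leq_trans (\sum_(k < n) K)); first by apply: leq_sum => k _; exact: hK.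
      by rewrite sum_nat_const card_ord.
    lia.
  by rewrite sum_nat_const_nat subn0.
have hD := size_DS n delta.
have h1 : (1 + n * K <= K.+1 * maxn 1 n)%N.
  case: n {hD hK T delta} => [|n]; first by rewrite mul0n addn0 muln1.
  rewrite (_ : maxn 1 n.+1 = n.+1); last by apply/maxn_idPr.
  rewrite mulSn mulnC; lia.
move: (leq_mul hD (leq_mul (leqnn (size x)) h1)).
set P := \prod_(k < n) (delta k).+1; set D := size (DS n delta).
set M := maxn 1 n; set X := size x; nia.
Qed.

Theorem theorem4p2 :
  (forall (R : realFieldType) (Sigma : finType) (m d : nat)
          (e : Sigma -> 'rV[R]_m) (C : 'rV[R]_m -> 'rV[R]_d -> 'rV[R]_d)
          (Chat : option (box R m) -> option (box R d) -> option (box R d))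
          (n : nat) (T : 'I_n -> trans Sigma) (delta : 'I_n -> nat)
          (x : seq Sigma),
     (forall k, 0 < tr_s (T k)) ->
     sound_abstract_cell R m d C Chat ->
     forall z : seq Sigma, in_pspace Sigma n T delta x z ->
       in_box R d (Fhat R Sigma m d e Chat n T delta x) (lstm R Sigma m d e C z 0%R))
  /\
  (forall K : nat, exists c : nat,
     forall (R : realFieldType) (Sigma : finType) (m d : nat)
            (e : Sigma -> 'rV[R]_m) (C : 'rV[R]_m -> 'rV[R]_d -> 'rV[R]_d)
            (Chat : option (box R m) -> option (box R d) -> option (box R d))
            (n : nat) (T : 'I_n -> trans Sigma) (delta : 'I_n -> nat)
            (x : seq Sigma),
       (forall k, 0 < tr_s (T k)) ->
       sound_abstract_cell R m d C Chat ->
       (forall k, tr_s (T k) <= K /\ tr_t (T k) <= K) ->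
       total_cost R Sigma m d e Chat n T delta x
         <= c * size x * maxn 1 n * \prod_(k < n) (delta k).+1).
Proof.
split.
  move=> R Sigma m d e C Chat n T delta x hs hC z hz.
  exact: (@soundness R Sigma m d e C Chat n T delta x hs hC z hz).
move=> K; exists K.+1 => R Sigma m d e C Chat n T delta x hs [_ _ hN] hK.
apply: total_bound => // k; by case: (hK k).
Qed.
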